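(* An L-state $\rho\in\mathscr L$ is an X-state if and only if its Bloch vector $(\rho_I)_{\emptyset\ne I}\in\bigoplus_{\emptyset\ne I}\mathscr V_I$ lies in $X(\mathfrak B)$ for some longitudinal system $\mathfrak B$.
   Context: Let $V_1,\dots,V_n$ be two-dimensional complex vector spaces, $\mathscr V_i=\mathfrak{sl}(V_i)$ with the form $\langle A,B\rangle=\tfrac12\operatorname{tr}(AB)$, and $\mathscr L$ the set of trace-one endomorphisms of $V_1\otimes\cdots\otimes V_n$. An X-state is a $\rho\in\mathscr L$ for which there exist ordered bases $\{e^i_0,e^i_1\}$ of the $V_i$ such that $\rho$ maps the span of the basis tensors $e^1_{\phi(1)}\otimes\cdots\otimes e^n_{\phi(n)}$ ($\phi:\{1,\dots,n\}\to\{0,1\}$) with $\sum\phi(i)$ even into itself, and the span of those with $\sum\phi(i)$ odd into itself. Bloch vector: for $\emptyset\ne I=\{i_1<\dots<i_k\}$, $\mathscr V_I=\mathscr V_{i_1}\otimes\cdots\otimes\mathscr V_{i_k}$ is regarded inside $\mathrm{End}(V_1\otimes\cdots\otimes V_n)$ by tensoring with identities on the other factors; each $\rho\in\mathscr L$ is uniquely $\rho=2^{-n}\mathrm{id}+\sum_{\emptyset\ne I}\rho_I$ with $\rho_I\in\mathscr V_I$. A longitudinal system $\mathfrak B=(\mathscr V_1^\ell,\dots,\mathscr V_n^\ell)$ consists of lines $\mathscr V_i^\ell\subseteq\mathscr V_i$ spanned by vectors $v$ with $\langle v,v\rangle\neq0$; $\mathscr V_i^t=(\mathscr V_i^\ell)^\perp$.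 $\mathscr V_I^e$ is the span of tensors $x_{i_1}\otimes\cdots\otimes x_{i_k}$ with each $x_{i_j}\in\mathscr V_{i_j}^\ell$ or $x_{i_j}\in\mathscr V_{i_j}^t$ and an even number of them transversal; $X(\mathfrak B)=\bigoplus_{\emptyset\ne I}\mathscr V_I^e$. *)

(* Defs.v *)
From HB Require Import structures.
From mathcomp Require Import all_boot all_order all_algebra.
From mathcomp Require Export complex.
From mathcomp Require Export reals.
Set Implicit Arguments.
Unset Strict Implicit.
Unset Printing Implicit Defensive.
Import GRing.Theory Num.Theory.
Local Open Scope ring_scope.

Section Defs.
Variable C : fieldType.
Variable n : nat.

(* Each V_i is C^2 with its standard basis; a basis tensor of
   V_1 (x) ... (x) V_n (standard basis) is indexed by phi : {0..n-1} -> {0,1}. *)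
Definition idx := {ffun 'I_n -> 'I_2}.
Definition vec := idx -> C.
(* endomorphisms of V_1 (x) ... (x) V_n, as matrices w.r.t. the standard basis *)
Definition op := idx * idx -> C.

Definition span (T : Type) (S : (T -> C) -> Prop) (f : T -> C) : Prop :=
  exists (m : nat) (c : 'I_m -> C) (s : 'I_m -> T -> C),
    (forall k, S (s k)) /\ forall t, f t = \sum_(k < m) c k * s k t.

Definition op_apply (A : op) (v : vec) : vec :=
  fun chi => \sum_(psi : idx) A (chi, psi) * v psi.

Definition optrace (A : op) : C := \sum_(phi : idx) A (phi, phi).

Definition idop : op := fun p => (p.1 == p.2)%:R.

Definition L_state (rho : op) : Prop := optrace rho = 1.

Definition parity (phi : idx) : bool := odd (\sum_(i < n) (nat_of_ord (phi i))).

(* Ordered bases of the V_i: P i is an invertible 2x2 matrix whose columns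
   are e^i_0, e^i_1.  basis_tensor P phi = e^1_{phi 1} (x) ... (x) e^n_{phi n}. *)
Definition basis_tensor (P : 'I_n -> 'M[C]_2) (phi : idx) : vec :=
  fun chi => \prod_(i < n) P i (chi i) (phi i).

Definition parity_span (P : 'I_n -> 'M[C]_2) (b : bool) : vec -> Prop :=
  span (fun v => exists phi, parity phi = b /\ v = basis_tensor P phi).

Definition is_X_state (rho : op) : Prop :=
  exists P : 'I_n -> 'M[C]_2, (forall i, P i \in unitmx) /\
    forall (b : bool) (v : vec), parity_span P b v -> parity_span P b (op_apply rho v).

Definition sl2 (x : 'M[C]_2) : Prop := \tr x = 0.
Definition form (x y : 'M[C]_2) : C := \tr (x *m y) / 2%:R.

(* x_{i_1} (x) ... (x) x_{i_k} for I = {i_1<...<i_k}, regarded in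
   End(V_1 (x) ... (x) V_n) by tensoring with identities outside I *)
Definition emb_tensor (I : {set 'I_n}) (x : 'I_n -> 'M[C]_2) : op :=
  fun p => \prod_(i < n)
             (if i \in I then x i (p.1 i) (p.2 i) else (p.1 i == p.2 i)%:R).

Definition V_I (I : {set 'I_n}) : op -> Prop :=
  span (fun A => exists x, (forall i, i \in I -> sl2 (x i)) /\ A = emb_tensor I x).

(* A longitudinal system: V_i^l = span (v i), with <v i, v i> <> 0 *)
Definition longitudinal (v : 'I_n -> 'M[C]_2) : Prop :=
  forall i, sl2 (v i) /\ form (v i) (v i) != 0.
Definition long_line (u x : 'M[C]_2) : Prop := exists a : C, x = a *: u.
Definition trans_space (u x : 'M[C]_2) : Prop := sl2 x /\ form x u = 0.

Definition V_I_e (v : 'I_n -> 'M[C]_2) (I : {set 'I_n}) : op -> Prop :=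
  span (fun A => exists (x : 'I_n -> 'M[C]_2) (T : {set 'I_n}),
          [/\ T \subset I, ~~ odd #|T|,
              (forall i, i \in I ->
                 if i \in T then trans_space (v i) (x i) else long_line (v i) (x i))
            & A = emb_tensor I x]).

Definition bloch_vector (rho : op) (r : {set 'I_n} -> op) : Prop :=
  (forall I, I != set0 -> V_I I (r I)) /\
  forall p, rho p = (2%:R ^- n) * idop p + \sum_(I : {set 'I_n} | I != set0) r I p.

Definition in_X (v : 'I_n -> 'M[C]_2) (r : {set 'I_n} -> op) : Prop :=
  forall I, I != set0 -> V_I_e v I (r I).

End Defs.

(* Main.v *)
Require Import Defs.
From HB Require Import structures.
From mathcomp Require Import all_boot all_order all_algebra.
From mathcomp Require Import complex reals.
From Stdlib Require Import FunctionalExtensionality.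
From mathcomp Require Import ring.
Set Implicit Arguments.
Unset Strict Implicit.
Unset Printing Implicit Defensive.
Import GRing.Theory Num.Theory.
Local Open Scope ring_scope.

Section Dev.
Variable C : numClosedFieldType.
Variable n : nat.
Local Notation idx := (idx n).
Local Notation op := (op C n).
Local Notation span := (@Defs.span C _).

Definition ten (a : 'I_n -> 'M[C]_2) : op := fun p => \prod_i a i (p.1 i) (p.2 i).
Definition opmul (A B : op) : op := fun p => \sum_(a : idx) A (p.1, a) * B (a, p.2).

Lemma sumprod (F : 'I_n -> 'I_2 -> C) :
  \sum_(f : idx) \prod_i F i (f i) = \prod_i \sum_a F i a.
Proof. by rewrite bigA_distr_bigA. Qed.

Lemma ten_mul a b : opmul (ten a) (ten b) = ten (fun i => a i *m b i).
Proof.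
apply: functional_extensionality => -[x y]; rewrite /opmul /ten /=.
rewrite (eq_bigr (fun f : idx => \prod_i (a i (x i) (f i) * b i (f i) (y i)))); last first.
  by move=> f _; rewrite big_split.
rewrite (sumprod (fun i j => a i (x i) j * b i j (y i))); apply: eq_bigr => i _; by rewrite mxE.
Qed.

Lemma prod_delta (x y : idx) : \prod_i ((x i == y i)%:R : C) = (x == y)%:R.
Proof.
case: eqP => [->|/eqP ne]; first by apply: big1 => i _; rewrite eqxx.
have [i hi] : exists i, x i != y i.
  apply/existsP; apply: contraR ne; rewrite negb_exists => /forallP h.
  by apply/eqP/ffunP => i; move: (h i); rewrite negbK => /eqP.
by rewrite (bigD1 i) //= (negbTE hi) mul0r.
Qed.

Lemma idop_ten : @idop C n = ten (fun _ => 1%:M).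
Proof.
apply: functional_extensionality => -[x y]; rewrite /idop /ten /= -prod_delta.
by apply: eq_bigr => i _; rewrite mxE.
Qed.

Lemma emb_ten I x :
  emb_tensor I x = ten (fun i => if i \in I then x i else 1%:M).
Proof.
apply: functional_extensionality => p; rewrite /emb_tensor /ten.
by apply: eq_bigr => i _; case: ifP => // _; rewrite mxE.
Qed.

Lemma opmulA A B D : opmul (opmul A B) D = opmul A (opmul B D).
Proof.
apply: functional_extensionality => -[x y]; rewrite /opmul /=.
under eq_bigr do rewrite big_distrl /=.
rewrite exchange_big; apply: eq_bigr => a _; rewrite big_distrr /=.
by apply: eq_bigr => b _; rewrite mulrA.
Qed.

Lemma opmul1l A : opmul (@idop C n) A = A.
Proof.
apply: functional_extensionality => -[x y]; rewrite /opmul /idop /=.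
rewrite (bigD1 x) //= eqxx mul1r big1 ?addr0 // => a /negbTE.
by rewrite eq_sym => ->; rewrite mul0r.
Qed.

Lemma opmul1r A : opmul A (@idop C n) = A.
Proof.
apply: functional_extensionality => -[x y]; rewrite /opmul /idop /=.
rewrite (bigD1 y) //= eqxx mulr1 big1 ?addr0 // => a /negbTE ->.
by rewrite mulr0.
Qed.

Definition Lin (F : op -> op) := forall (K : Type) (r : seq K) (P : pred K)
  (c : K -> C) (g : K -> op) (a : C) (f h : op),
  (forall p, h p = a * f p + \sum_(k <- r | P k) c k * g k p) ->
  forall p, F h p = a * F f p + \sum_(k <- r | P k) c k * F (g k) p.

Lemma Lin_mulr A : Lin (opmul A).
Proof.
move=> K r P c g a f h hh [x y]; rewrite /opmul /=.
transitivity (\sum_b (a * (A (x,b) * f (b,y)) +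
   \sum_(k <- r | P k) c k * (A (x,b) * g k (b,y)))).
  apply: eq_bigr => b _; rewrite hh mulrDr mulrCA big_distrr /=; congr (_ + _).
  by apply: eq_bigr => k _; rewrite mulrCA.
rewrite big_split /= -big_distrr /=; congr (_ + _).
rewrite exchange_big /=; apply: eq_bigr => k _; by rewrite big_distrr.
Qed.

Lemma Lin_mull B : Lin (opmul ^~ B).
Proof.
move=> K r P c g a f h hh [x y]; rewrite /opmul /=.
transitivity (\sum_b (a * (f (x,b) * B (b,y)) +
   \sum_(k <- r | P k) c k * (g k (x,b) * B (b,y)))).
  apply: eq_bigr => b _; rewrite hh mulrDl -mulrA big_distrl /=; congr (_ + _).
  by apply: eq_bigr => k _; rewrite mulrA.
rewrite big_split /= -big_distrr /=; congr (_ + _).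
rewrite exchange_big /=; apply: eq_bigr => k _; by rewrite big_distrr.
Qed.

Lemma Lin_comp F G : Lin F -> Lin G -> Lin (F \o G).
Proof.
move=> LF LG K r P c g a f h hh p /=; apply: LF => q; exact: LG.
Qed.


Section SpanLemmas.
Variable T : Type.
Variable S : (T -> C) -> Prop.

Lemma span0 : span S (fun _ => 0).
Proof. by exists 0%N, (fun _ => 0), (fun _ _ => 0); split=> [[]|t]; rewrite ?big_ord0. Qed.

Lemma span1 g : S g -> span S g.
Proof. by move=> Sg; exists 1%N, (fun _ => 1), (fun _ => g); split=> // t; rewrite big_ord1 mul1r. Qed.

Lemma span_ext f g : (forall t, f t = g t) -> span S f -> span S g.
Proof. by move=> fg [m [c [s [h1 h2]]]]; exists m, c, s; split=> // t; rewrite -fg. Qed.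

Lemma span_zero f : (forall t, f t = 0) -> span S f.
Proof. by move=> h; apply: span_ext span0 => t; rewrite h. Qed.

Lemma spanD f g : span S f -> span S g -> span S (fun t => f t + g t).
Proof.
move=> [m1 [c1 [s1 [h1 e1]]]] [m2 [c2 [s2 [h2 e2]]]].
exists (m1 + m2)%N, (fun k => match split k with inl i => c1 i | inr j => c2 j end),
  (fun k => match split k with inl i => s1 i | inr j => s2 j end); split.
  by move=> k; case: (split k).
move=> t; rewrite big_split_ord /= e1 e2; congr (_ + _); apply: eq_bigr => i _.
  by have := unsplitK (inl i : 'I_m1 + 'I_m2) => /= ->.
by have := unsplitK (inr i : 'I_m1 + 'I_m2) => /= ->.
Qed.

Lemma spanZ a f : span S f -> span S (fun t => a * f t).
Proof.
move=> [m [c [s [h e]]]]; exists m, (fun k => a * c k), s; split=> // t.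
by rewrite e big_distrr /=; apply: eq_bigr => k _; rewrite mulrA.
Qed.

Lemma span_sum (K : Type) (r : seq K) (P : pred K) (g : K -> T -> C) :
  (forall k, P k -> span S (g k)) -> span S (fun t => \sum_(k <- r | P k) g k t).
Proof.
move=> hg; elim: r => [|k r IH].
  by apply: span_ext span0 => t; rewrite big_nil.
case Pk: (P k).
  by apply: span_ext (spanD (hg k Pk) IH) => t; rewrite big_cons Pk.
by apply: span_ext IH => t; rewrite big_cons Pk.
Qed.

Lemma span_ind (Q : (T -> C) -> Prop) f :
  Q (fun _ => 0) -> (forall f g, Q f -> Q g -> Q (fun t => f t + g t)) ->
  (forall a f, Q f -> Q (fun t => a * f t)) ->
  (forall f g, (forall t, f t = g t) -> Q f -> Q g) ->
  (forall g, S g -> Q g) -> span S f -> Q f.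
Proof.
move=> Q0 QD QZ Qe QS [m [c [s [h e]]]].
apply: (Qe _ _ (fun t => esym (e t))).
elim: m c s h {e} => [|m IH] c s h.
  by apply: Qe Q0 => t; rewrite big_ord0.
apply: (Qe (fun t => (\sum_(k < m) c (widen_ord (leqnSn m) k) * s (widen_ord (leqnSn m) k) t) +
   c ord_max * s ord_max t)).
  by move=> t; rewrite big_ord_recr.
apply: QD; last by apply: QZ; apply: QS.
exact: IH.
Qed.
End SpanLemmas.

Lemma span_Lin F S S' (f : op) : Lin F -> (forall g, S g -> span S' (F g)) ->
  span S f -> span S' (F f).
Proof.
move=> LF hS [m [c [s [h e]]]].
have e' : forall p, f p = 0 * f p + \sum_(k <- index_enum 'I_m | true) c k * s k p.
  by move=> p; rewrite mul0r add0r e.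
apply: span_ext (fun p => esym (LF _ _ _ _ _ _ _ _ e' p)) _.
apply: span_ext (spanD (spanZ 0 (span0 _)) (span_sum _ (fun k _ => spanZ (c k) (hS _ (h k))))) => t.
by rewrite !mul0r.
Qed.


Definition cj (M N : 'I_n -> 'M[C]_2) (A : op) : op := opmul (opmul (ten M) A) (ten N).

Lemma Lin_cj (M N : 'I_n -> 'M[C]_2) : Lin (cj M N).
Proof. exact: (Lin_comp (Lin_mull (ten N)) (Lin_mulr (ten M))). Qed.

Lemma cj_ten M N a : cj M N (ten a) = ten (fun i => M i *m a i *m N i).
Proof. by rewrite /cj !ten_mul. Qed.

Lemma ten_ext a b : (forall i, a i = b i) -> ten a = ten b.
Proof. by move=> h; rewrite (functional_extensionality _ _ h). Qed.

Lemma cj_emb M N I x : (forall i, M i *m N i = 1%:M) ->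
  cj M N (emb_tensor I x) = emb_tensor I (fun i => M i *m x i *m N i).
Proof.
move=> h; rewrite !emb_ten cj_ten; apply: ten_ext => i.
by case: ifP => // _; rewrite mulmx1 h.
Qed.

Lemma cj_id M N : (forall i, M i *m N i = 1%:M) -> cj M N (@idop C n) = @idop C n.
Proof.
by move=> h; rewrite idop_ten cj_ten; apply: ten_ext => i; rewrite mulmx1 h.
Qed.

Lemma ten_one M N : (forall i, M i *m N i = 1%:M) -> opmul (ten M) (ten N) = @idop C n.
Proof. by move=> h; rewrite ten_mul idop_ten; apply: ten_ext. Qed.

Lemma cj_inv P Q A : (forall i, P i *m Q i = 1%:M) -> cj P Q (cj Q P A) = A.
Proof.
move=> h; have h' i : Q i *m P i = 1%:M by apply: mulmx1C.
rewrite /cj !opmulA ten_one // opmul1r -opmulA ten_one //; exact: opmul1l.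
Qed.

Definition even_op (A : op) := forall x y : idx, parity x != parity y -> A (x, y) = 0.

Lemma bt_ten P (phi chi : idx) : basis_tensor P phi chi = ten P (chi, phi).
Proof. by []. Qed.

Lemma xstate_even P Q (rho : op) : (forall i, Q i *m P i = 1%:M) ->
  (forall b v, parity_span P b v -> parity_span P b (op_apply rho v)) ->
  even_op (cj Q P rho).
Proof.
move=> hQP hX x y hxy.
have := hX (parity y) (basis_tensor P y) (span1 (ex_intro _ y (conj erefl erefl))).
move=> [m [c [s [hs e]]]].
rewrite /cj opmulA {1}/opmul /=.
have e2 a : opmul rho (ten P) (a, y) = \sum_(k < m) c k * s k a.
  by rewrite -e.
under eq_bigr do rewrite e2 big_distrr /=.
rewrite exchange_big /=; apply: big1 => k _.
have [phi [pphi ->]] := hs k.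
have -> : \sum_(i : idx) ten Q (x, i) * (c k * basis_tensor P phi i) =
   c k * opmul (ten Q) (ten P) (x, phi).
  by rewrite /opmul big_distrr /=; apply: eq_bigr => a _; rewrite mulrCA.
rewrite ten_one // /idop /=; case: eqP => [exphi|]; last by rewrite mulr0.
by move: hxy; rewrite exphi pphi eqxx.
Qed.

Lemma even_xstate P Q (rho : op) : (forall i, P i *m Q i = 1%:M) ->
  even_op (cj Q P rho) ->
  forall b v, parity_span P b v -> parity_span P b (op_apply rho v).
Proof.
move=> hPQ hev b v [m [c [s [hs e]]]].
have hQP i : Q i *m P i = 1%:M by apply: mulmx1C.
have ee : forall chi, op_apply rho v chi = \sum_(k <- index_enum 'I_m | true) c k * op_apply rho (s k) chi.
  move=> chi; rewrite /op_apply; under eq_bigr do rewrite e big_distrr /=.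
  rewrite exchange_big; apply: eq_bigr => k _; rewrite big_distrr /=.
  by apply: eq_bigr => a _; rewrite mulrCA.
apply: span_ext (fun t => esym (ee t)) _.
apply: span_sum => k _; apply: spanZ.
have [phi [pphi ->]] := hs k.
have -> : op_apply rho (basis_tensor P phi) = fun chi => opmul rho (ten P) (chi, phi) by [].
move: (cj_inv rho hPQ) hev; set s' := cj Q P rho => hrho hev'; clearbody s'.
rewrite -hrho /cj !opmulA ten_one // opmul1r.
have ee2 : forall chi, opmul (ten P) s' (chi, phi) =
   \sum_(psi <- index_enum idx | true) s' (psi, phi) * basis_tensor P psi chi.
  by move=> chi; rewrite /opmul; apply: eq_bigr => a _; rewrite mulrC.
apply: span_ext (fun t => esym (ee2 t)) _.
apply: span_sum => psi _.
case: (eqVneq (parity psi) b) => [ep|np].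
  by apply: spanZ; apply: span1; exists psi.
apply: span_zero => t; rewrite hev' ?mul0r //; by rewrite pphi.
Qed.


Definition ymx (q : idx * idx) (i : 'I_n) : 'M[C]_2 :=
  delta_mx (q.1 i) (q.2 i) - (((q.1 i == q.2 i)%:R / 2%:R) *: 1%:M).
Definition kap (q : idx * idx) (I : {set 'I_n}) : C :=
  \prod_(i | i \notin I) ((q.1 i == q.2 i)%:R / 2%:R).
Definition rstar (sig : op) (I : {set 'I_n}) : op :=
  fun p => \sum_(q : idx * idx) (sig q * kap q I) * emb_tensor I (ymx q) p.

Lemma two_neq0 : (2%:R : C) != 0.
Proof. by rewrite pnatr_eq0. Qed.

Lemma ord2_cases (a : 'I_2) : a = ord0 \/ a = ord_max.
Proof. by case: a => [[|[|]]] // h; [left|right]; apply: val_inj. Qed.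

Lemma sum2 (F : 'I_2 -> C) : \sum_i F i = F ord0 + F ord_max.
Proof. rewrite big_ord_recr big_ord1 /=; congr (F _ + _); exact: val_inj. Qed.

Lemma tr2 (A : 'M[C]_2) : \tr A = A ord0 ord0 + A ord_max ord_max.
Proof. by rewrite /mxtrace sum2. Qed.

Lemma ymx_tr q i : \tr (ymx q i) = 0.
Proof.
have h2 := two_neq0.
rewrite tr2 /ymx !mxE.
case: (ord2_cases (q.1 i)) => ->; case: (ord2_cases (q.2 i)) => -> /=;
  rewrite ?eqxx /=; rewrite ?mulr1 ?mul0r ?subr0 ?addr0 ?mul1r; field.
all: by [].
Qed.

Lemma delta_split (q : idx * idx) i (a b : 'I_2) :
  delta_mx (q.1 i) (q.2 i) a b =
  ymx q i a b + ((q.1 i == q.2 i)%:R / 2%:R) * (1%:M : 'M[C]_2) a b.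
Proof. by rewrite /ymx !mxE addrNK. Qed.

Lemma eq_prod_delta (p q : idx * idx) :
  (p == q)%:R = \prod_i (delta_mx (q.1 i) (q.2 i) : 'M[C]_2) (p.1 i) (p.2 i).
Proof.
under eq_bigr do rewrite mxE -mulnb natrM.
rewrite big_split /= !prod_delta -natrM; congr (_ %:R).
by rewrite mulnb; case: p q => [x y] [x' y']; rewrite xpair_eqE.
Qed.

Lemma prod_ifsplit (I : {set 'I_n}) (F G H : 'I_n -> C) :
  \prod_i (if i \in I then F i else G i * H i) =
  (\prod_(i | i \notin I) G i) * \prod_i (if i \in I then F i else H i).
Proof.
rewrite [X in _ = X * _]big_mkcond /= -big_split /=; apply: eq_bigr => i _.
by case: ifP => _; rewrite ?mul1r.
Qed.

Lemma expand_point (p q : idx * idx) :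
  (p == q)%:R = \sum_(J : {set 'I_n}) kap q J * emb_tensor J (ymx q) p.
Proof.
rewrite eq_prod_delta.
under eq_bigr do rewrite delta_split.
rewrite bigA_distr; apply: eq_bigr => J _.
rewrite /kap /emb_tensor -prod_ifsplit; apply: eq_bigr => i _; case: ifP => // _; by rewrite mxE.
Qed.

Lemma kap0 q : kap q set0 = (q.1 == q.2)%:R * (2%:R ^- n).
Proof.
rewrite /kap.
rewrite (eq_bigl predT) => [|i]; last by rewrite in_set0.
rewrite big_split /= prod_delta prodr_const card_ord exprVn //.
Qed.

Lemma emb0 x : emb_tensor set0 x = @idop C n.
Proof.
by rewrite emb_ten idop_ten; apply: ten_ext => i; rewrite in_set0.
Qed.

Lemma bloch_exists (sig : op) : L_state sig -> bloch_vector sig (rstar sig).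
Proof.
move=> hL; split.
  move=> I _; apply: span_sum => q _; apply: spanZ; apply: span1.
  by exists (ymx q); split=> // i _; apply: ymx_tr.
move=> p.
have e1 : sig p = \sum_(q : idx * idx) sig q * (p == q)%:R.
  rewrite (bigD1 p) //= eqxx mulr1 big1 ?addr0 // => q /negbTE.
  by rewrite eq_sym => ->; rewrite mulr0.
rewrite e1.
under eq_bigr do rewrite expand_point big_distrr /=.
rewrite exchange_big /= (bigD1 set0) //=; congr (_ + _).
  under eq_bigr do rewrite emb0 kap0.
  transitivity ((\sum_(q : idx * idx) sig q * (q.1 == q.2)%:R) * 2%:R ^- n * @idop C n p).
    rewrite !big_distrl /=; apply: eq_bigr => q _; by rewrite !mulrA.
  have -> : \sum_(q : idx * idx) sig q * (q.1 == q.2)%:R = 1.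
    rewrite (eq_bigr (fun q => sig (q.1, q.2) * (q.1 == q.2)%:R)); last by case.
    have e := pair_bigA _ (fun x y : idx => sig (x, y) * (x == y)%:R).
    rewrite /= in e; rewrite -e; transitivity (optrace sig); last exact: hL.
    apply: eq_bigr => x _.
    rewrite (bigD1 x) //= eqxx /= mulr1 big1 ?addr0 // => y /negbTE.
    by rewrite eq_sym => ->; rewrite mulr0.
  rewrite mul1r.
  reflexivity.
apply: eq_big => [J|J _] //; rewrite /rstar; apply: eq_bigr => q _; by rewrite mulrA.
Qed.


Definition ip (A B : 'M[C]_2) : C := \sum_a \sum_b A a b * B a b.
Definition pairW (f W : op) : C := \sum_(p : idx * idx) f p * W p.

Lemma pair_ten a w : pairW (ten a) (ten w) = \prod_i ip (a i) (w i).
Proof.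
rewrite /pairW /ten (eq_bigr (fun p : idx * idx =>
   \prod_i (a i (p.1 i) (p.2 i) * w i (p.1 i) (p.2 i)))); last by move=> p _; rewrite big_split.
have e := pair_bigA _ (fun x y : idx => \prod_i (a i (x i) (y i) * w i (x i) (y i))).
rewrite /= in e; rewrite -e.
under eq_bigr => x _ do rewrite (sumprod (fun i b => a i (x i) b * w i (x i) b)).
by rewrite (sumprod (fun i c => \sum_b a i c b * w i c b)).
Qed.

Lemma ip_1 (x : 'M[C]_2) : ip x 1%:M = \tr x.
Proof.
rewrite /ip tr2 !sum2 !mxE /=.
by rewrite !mulr1 !mulr0 addr0 add0r.
Qed.

Lemma ip_ymx (x : 'M[C]_2) q i : \tr x = 0 -> ip x (ymx q i) = x (q.1 i) (q.2 i).
Proof.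
rewrite tr2 /ip /ymx => hx; rewrite !sum2 !mxE.
have hx' : x ord_max ord_max = - x ord0 ord0 by rewrite -(addKr (x ord0 ord0) (x ord_max ord_max)) hx addr0.
have h2 := two_neq0.
case: (ord2_cases (q.1 i)) => ->; case: (ord2_cases (q.2 i)) => -> /=;
  rewrite ?eqxx /= ?(_ : (ord0 == ord_max :> 'I_2) = false) // ?(_ : (ord_max == ord0 :> 'I_2) = false) //= hx';
  field.
all: by [].
Qed.

Lemma ip_1ymx q i : ip 1%:M (ymx q i) = 0.
Proof.
rewrite /ip /ymx !sum2 !mxE.
have h2 := two_neq0.
case: (ord2_cases (q.1 i)) => ->; case: (ord2_cases (q.2 i)) => -> /=;
  rewrite ?eqxx /= ?(_ : (ord0 == ord_max :> 'I_2) = false) // ?(_ : (ord_max == ord0 :> 'I_2) = false) //=;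
  field.
all: by [].
Qed.

Lemma ip_11 : ip (1%:M : 'M[C]_2) 1%:M = 2%:R.
Proof. by rewrite ip_1 mxtrace1. Qed.

Lemma ten_zero (a : 'I_n -> 'M[C]_2) (p : idx * idx) i : a i (p.1 i) (p.2 i) = 0 -> ten a p = 0.
Proof. by move=> h; rewrite /ten (bigD1 i) //= h mul0r. Qed.

Lemma prod_zero (F : 'I_n -> C) i : F i = 0 -> \prod_j F j = 0.
Proof. by move=> h; rewrite (bigD1 i) //= h mul0r. Qed.

Lemma bloch_unique (sig : op) r r' : bloch_vector sig r -> bloch_vector sig r' ->
  forall J, J != set0 -> forall p, r J p = r' J p.
Proof.
move=> [hr er] [hr' er'] J hJ p0; apply/eqP; rewrite -subr_eq0; apply/eqP.
pose s I p := r I p + (-1) * r' I p.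
have hs I : I != set0 -> V_I I (s I).
  by move=> hI; apply: spanD; [apply: hr | apply: spanZ; apply: hr'].
have hsum p : \sum_(I | I != set0) s I p = 0.
  rewrite /s big_split /= -big_distrr /= mulN1r; apply/eqP; rewrite subr_eq0; apply/eqP.
  by apply: (addrI (2%:R ^- n * @idop C n p)); rewrite -er -er'.
rewrite -mulN1r -/(s J p0).
case: p0 => x y.
case: (boolP [exists i, (i \notin J) && (x i != y i)]) => [/existsP [i /andP [iJ ne]]|].
  apply: (span_ind (Q := fun f => f (x, y) = 0)) (hs _ hJ) => //.
  - by move=> f g -> ->; rewrite addr0.
  - by move=> a f ->; rewrite mulr0.
  - by move=> f g fg <-.
  - move=> g [z [_ ->]]; rewrite emb_ten; apply: (ten_zero (i := i)) => /=.
    by rewrite (negbTE iJ) mxE (negbTE ne).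
rewrite negb_exists => /forallP hxy.
have exy i : i \notin J -> x i = y i.
  by move=> iJ; move: (hxy i); rewrite iJ /= negbK => /eqP.
pose w i := if i \in J then ymx (x, y) i else 1%:M.
pose K := \prod_i (if i \in J then 1 else (2%:R : C)).
have hK : K != 0.
  by rewrite prodf_seq_neq0; apply/allP => i _; case: ifP => _; rewrite ?oner_eq0 ?two_neq0.
have pJ : pairW (s J) (ten w) = K * s J (x, y).
  apply: (span_ind (Q := fun f => pairW f (ten w) = K * f (x, y))) (hs _ hJ).
  - by rewrite /pairW big1 ?mulr0 // => p _; rewrite mul0r.
  - move=> f g hf hg; rewrite /pairW; under eq_bigr do rewrite mulrDl.
    by rewrite big_split /= -/(pairW f _) -/(pairW g _) hf hg mulrDr.
  - move=> a f hf; rewrite /pairW; under eq_bigr do rewrite -mulrA.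
    by rewrite -big_distrr /= -/(pairW f _) hf mulrCA.
  - move=> f g fg hf; rewrite /pairW -fg; rewrite /pairW in hf.
    by rewrite (eq_bigr (fun p => f p * ten w p)) // => p _; rewrite fg.
  - move=> g [z [hz ->]]; rewrite emb_ten pair_ten /ten /K -big_split /=.
    apply: eq_bigr => i _; rewrite /w; case: ifP => iJ.
      by rewrite mul1r ip_ymx //; apply: hz.
    by rewrite ip_11 mxE /= exy ?iJ // eqxx mulr1.
have p0 I : I != set0 -> I != J -> pairW (s I) (ten w) = 0.
  move=> hI hIJ.
  apply: (span_ind (Q := fun f => pairW f (ten w) = 0)) (hs _ hI).
  - by rewrite /pairW big1 // => p _; rewrite mul0r.
  - move=> f g hf hg; rewrite /pairW; under eq_bigr do rewrite mulrDl.
    by rewrite big_split /= -/(pairW f _) -/(pairW g _) hf hg addr0.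
  - move=> a f hf; rewrite /pairW; under eq_bigr do rewrite -mulrA.
    by rewrite -big_distrr /= -/(pairW f _) hf mulr0.
  - move=> f g fg hf; rewrite /pairW in hf *.
    rewrite (eq_bigr (fun p => f p * ten w p)) // => p _; by rewrite fg.
  - move=> g [z [hz ->]]; rewrite emb_ten pair_ten.
    case: (boolP (I \subset J)) => sIJ.
      have : ~~ (J \subset I) by apply: contra hIJ => sJI; apply/eqP/setP/subset_eqP/andP.
      case/subsetPn => i iJ niI; apply: (prod_zero (i := i)).
      by rewrite (negbTE niI) /w iJ ip_1ymx.
    case/subsetPn: sIJ => i iI niJ; apply: (prod_zero (i := i)).
    by rewrite iI /w (negbTE niJ) ip_1; apply: hz.
have : pairW (fun p => \sum_(I | I != set0) s I p) (ten w) = 0.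
  by rewrite /pairW big1 // => p _; rewrite hsum mul0r.
have -> : pairW (fun p => \sum_(I | I != set0) s I p) (ten w) =
   \sum_(I | I != set0) pairW (s I) (ten w).
  rewrite /pairW; under eq_bigr do rewrite big_distrl /=.
  by rewrite exchange_big.
rewrite (bigD1 J) //= big1 ?addr0 ?pJ.
  by move/eqP; rewrite mulf_eq0 (negbTE hK) => /eqP.
by move=> I /andP [hI hIJ]; apply: p0.
Qed.


Definition dset (x y : idx) : {set 'I_n} := [set i | x i != y i].

Lemma parity_dset (x y : idx) : parity x (+) parity y = odd #|dset x y|.
Proof.
rewrite /parity -oddD -big_split /=.
have e i : (x i + y i = (x i != y i) + (x i * y i).*2)%N.
  by case: (ord2_cases (x i)) => ->; case: (ord2_cases (y i)) => ->.
rewrite (eq_bigr _ (fun i _ => e i)) big_split /=.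
have e2 : (\sum_i (x i * y i).*2 = (\sum_i (x i * y i)) * 2)%N.
  by rewrite big_distrl /=; apply: eq_bigr => i _; rewrite muln2.
rewrite e2 oddD oddM andbF addbF.
rewrite -sum1_card big_mkcond /=.
rewrite [in RHS]big_mkcond; congr odd; apply: eq_bigr => i _.
by rewrite inE; case: (x i != y i).
Qed.


Definition Dm : 'M[C]_2 :=
  \matrix_(a, b) (if a == b then (if a == ord0 then 1 else -1) else 0).

Lemma ord_neq : (ord0 == ord_max :> 'I_2) = false /\ (ord_max == ord0 :> 'I_2) = false.
Proof. by []. Qed.

Ltac mx2_cases a := case: (ord2_cases a) => ->.

Lemma Dm_tr : \tr Dm = 0.
Proof. by rewrite tr2 !mxE /= addrN. Qed.

Lemma Dm_sq : Dm *m Dm = 1%:M.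
Proof.
apply/matrixP => a b; rewrite !mxE sum2 !mxE.
by mx2_cases a; mx2_cases b => /=; rewrite ?mulr0 ?mul0r ?addr0 ?add0r ?mulr1 ?mulrNN ?mul1r.
Qed.

Lemma Dm_form : Defs.form Dm Dm = 1.
Proof. by rewrite /Defs.form Dm_sq mxtrace1 divff // two_neq0. Qed.

Lemma ymx_trans (q : idx * idx) i : q.1 i != q.2 i -> trans_space Dm (ymx q i).
Proof.
move=> ne; split; first exact: ymx_tr.
rewrite /Defs.form /ymx (negbTE ne) /= mul0r scale0r subr0.
apply/eqP; rewrite mulf_eq0; apply/orP; left; apply/eqP.
rewrite tr2 !mxE !sum2 !mxE; move: ne.
by mx2_cases (q.1 i); mx2_cases (q.2 i) => //= _; rewrite ?mulr0 ?mul0r ?addr0 ?add0r.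
Qed.

Lemma ymx_long (q : idx * idx) i : q.1 i = q.2 i -> long_line Dm (ymx q i).
Proof.
move=> e; exists (if q.1 i == ord0 then 2%:R^-1 else - 2%:R^-1).
have h2 := two_neq0.
apply/matrixP => a b; rewrite /ymx -e eqxx !mxE.
mx2_cases (q.1 i); mx2_cases a; mx2_cases b => /=; field.
all: by [].
Qed.

Lemma rstar_X (sig : op) : even_op sig -> forall I, I != set0 -> V_I_e (fun _ : 'I_n => Dm) I (rstar sig I).
Proof.
move=> hev I hI; apply: span_sum => q _.
case: (boolP (dset q.1 q.2 \subset I)) => sub; last first.
  case/subsetPn: sub => i; rewrite inE => ne niI.
  apply: span_zero => t; rewrite /kap (bigD1 i) //= (negbTE ne) /=.
  by rewrite !mul0r mulr0 mul0r.
case: (boolP (parity q.1 == parity q.2)) => hp; last first.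
  apply: span_zero => t; case: q hp {sub} => x y /= hp.
  by rewrite hev // !mul0r.
apply: spanZ; apply: span1; exists (ymx q), (dset q.1 q.2); split => //.
  by rewrite -parity_dset (eqP hp) addbb.
move=> i iI; case: ifP => [|].
  by rewrite inE => ne; apply: ymx_trans.
by rewrite inE => /negbT; rewrite negbK => /eqP; apply: ymx_long.
Qed.

Lemma emb_even (I : {set 'I_n}) (x : 'I_n -> 'M[C]_2) (T : {set 'I_n}) :
  T \subset I -> ~~ odd #|T| ->
  (forall i, i \in I -> if i \in T then (forall a, x i a a = 0)
                        else (forall a b, a != b -> x i a b = 0)) ->
  even_op (emb_tensor I x).
Proof.
move=> sTI hT hx u w hp.
have hd : odd #|dset u w|.
  by rewrite -parity_dset; case: (parity u) (parity w) hp => -[].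
have [i hi] : exists i, (i \in dset u w) != (i \in T).
  apply/existsP; apply: contraR hT; rewrite negb_exists => /forallP h.
  have -> : T = dset u w by apply/setP => i; move: (h i); rewrite negbK => /eqP.
  by rewrite ?negbK.
rewrite emb_ten; apply: (ten_zero (i := i)) => /=.
move: hi; rewrite inE.
case: (boolP (i \in T)) => iT /=.
  move=> hne; have e : u i = w i by apply/eqP; move: hne; case: (u i == w i).
  by rewrite (subsetP sTI _ iT); move: (hx i (subsetP sTI _ iT)); rewrite iT e; apply.
move=> ne'; have ne : u i != w i by move: ne'; case: (u i != w i).
 case: ifP => iI.
  by move: (hx i iI); rewrite (negbTE iT); apply.
by rewrite mxE (negbTE ne).
Qed.


Definition mx2 (a b c d : C) : 'M[C]_2 :=
  \matrix_(i, j) if i == ord0 then (if j == ord0 then a else b) else (if j == ord0 then c else d).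

Lemma diag_exists (v : 'M[C]_2) : \tr v = 0 -> Defs.form v v != 0 ->
  exists P Q (l : C), [/\ P *m Q = 1%:M, Q *m P = 1%:M, Q *m v *m P = l *: Dm & l != 0].
Proof.
have h2 := two_neq0.
move=> htr hf.
have hd : v ord_max ord_max = - v ord0 ord0.
  by rewrite -(addKr (v ord0 ord0) (v ord_max ord_max)) -tr2 htr addr0.
set a := v ord0 ord0 in hd *; set b := v ord0 ord_max; set c := v ord_max ord0.
have hmu : a ^+ 2 + b * c != 0.
  move: hf; rewrite /Defs.form tr2 !mxE !sum2 hd -/a -/b -/c.
  apply: contra => /eqP h; apply/eqP.
  have -> : a * a + b * c + (c * b + - a * - a) = 2%:R * (a ^+ 2 + b * c) by ring.
  by rewrite h mulr0 mul0r.
case: (eqVneq c 0) => hc.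
  have ha : a != 0.
    by move: hmu; rewrite hc mulr0 addr0 expf_eq0 /=.
  exists (mx2 1 b 0 (- (2%:R * a))), (mx2 1 (b / (2%:R * a)) 0 (- (2%:R * a)^-1)), a.
  split => //.
  - apply/matrixP => i j; rewrite !mxE !sum2 !mxE.
    by mx2_cases i; mx2_cases j => /=; field; rewrite ?mulf_neq0 ?hc ?hl ?h2.
  - apply/matrixP => i j; rewrite !mxE !sum2 !mxE.
    by mx2_cases i; mx2_cases j => /=; field; rewrite ?mulf_neq0 ?hc ?hl ?h2.
  - apply/matrixP => i j; rewrite ?mxE ?sum2 ?mxE ?sum2 ?mxE ?sum2 ?mxE.
    mx2_cases i; mx2_cases j => /=; rewrite ?hd -/a -/b -/c ?hc; field; by rewrite ?mulf_neq0 ?hc ?hl ?h2.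
pose l := sqrtC (a ^+ 2 + b * c).
have hl2 : l ^+ 2 = a ^+ 2 + b * c by rewrite sqrtCK.
have hl : l != 0.
  by apply: contra hmu => /eqP l0; rewrite -hl2 l0 expr0n.
have hb : b = (l ^+ 2 - a ^+ 2) / c by rewrite hl2 addrC addKr mulfK.
exists (mx2 (a + l) (a - l) c c),
  (mx2 (2%:R * l)^-1 (- (a - l) / (2%:R * l * c)) (- (2%:R * l)^-1) ((a + l) / (2%:R * l * c))), l.
split => //.
- apply/matrixP => i j; rewrite !mxE !sum2 !mxE.
  by mx2_cases i; mx2_cases j => /=; field; rewrite ?hc ?hl ?h2.
- apply/matrixP => i j; rewrite !mxE !sum2 !mxE.
  by mx2_cases i; mx2_cases j => /=; field; rewrite ?mulf_neq0 ?hc ?hl ?h2.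
- apply/matrixP => i j; rewrite ?mxE ?sum2 ?mxE ?sum2 ?mxE ?sum2 ?mxE.
  mx2_cases i; mx2_cases j => /=; rewrite ?hd -/a -/b -/c hb; field; by rewrite ?mulf_neq0 ?hc ?hl ?h2.
Qed.


Lemma tr_conj (M N x : 'M[C]_2) : N *m M = 1%:M -> \tr (M *m x *m N) = \tr x.
Proof. by move=> h; rewrite mxtrace_mulC mulmxA h mul1mx. Qed.

Lemma conj_mul (P Q x y : 'M[C]_2) : Q *m P = 1%:M ->
  (P *m x *m Q) *m (P *m y *m Q) = P *m (x *m y) *m Q.
Proof.
move=> h; rewrite !mulmxA -(mulmxA (P *m x) Q P) h mulmx1.
by rewrite -(mulmxA P x y).
Qed.

Lemma tr_eq0_form (x y : 'M[C]_2) : Defs.form x y = 0 -> \tr (x *m y) = 0.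
Proof.
rewrite /Defs.form => /eqP; rewrite mulf_eq0 invr_eq0 (negbTE two_neq0) orbF.
by move/eqP.
Qed.

Lemma frame_long (P Q v x : 'M[C]_2) l : Q *m v *m P = l *: Dm -> long_line v x ->
  forall a b, a != b -> (Q *m x *m P) a b = 0.
Proof.
move=> hv [c ->] a b ne.
rewrite -scalemxAr -scalemxAl hv scalerA mxE mxE (negbTE ne) mulr0 //.
Qed.

Lemma frame_trans (P Q v x : 'M[C]_2) l : P *m Q = 1%:M -> Q *m v *m P = l *: Dm -> l != 0 ->
  trans_space v x -> forall a, (Q *m x *m P) a a = 0.
Proof.
move=> hPQ hv hl [hx hxv] a.
set y := Q *m x *m P.
have t1 : \tr y = 0 by rewrite /y tr_conj.
have t2 : \tr (y *m (l *: Dm)) = 0.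
  rewrite -hv /y conj_mul // tr_conj //.
  exact: tr_eq0_form.
rewrite -scalemxAr mxtraceZ in t2.
move/eqP: t2; rewrite mulf_eq0 (negbTE hl) /= => /eqP t2.
clearbody y; rewrite tr2 in t1; rewrite tr2 !mxE !sum2 !mxE /= in t2.
move: t2; rewrite !mulr0 !addr0 add0r !mulr1 mulrN1 => t2.
have e0 : y ord0 ord0 = 0.
  have key : 2%:R * y ord0 ord0 = (y ord0 ord0 + y ord_max ord_max) + (y ord0 ord0 + - y ord_max ord_max) by ring.
  move: key; rewrite t1 t2 addr0 => /eqP; rewrite mulf_eq0 (negbTE two_neq0) /=; by move/eqP.
have e1 : y ord_max ord_max = 0 by move: t1; rewrite e0 add0r.
by mx2_cases a.
Qed.

Lemma frame_back_long (P Q x : 'M[C]_2) : long_line Dm x -> long_line (P *m Dm *m Q) (P *m x *m Q).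
Proof. by move=> [c ->]; exists c; rewrite -scalemxAr -scalemxAl. Qed.

Lemma frame_back_trans (P Q x : 'M[C]_2) : Q *m P = 1%:M -> trans_space Dm x ->
  trans_space (P *m Dm *m Q) (P *m x *m Q).
Proof.
move=> h [hx hxD]; split; first by rewrite /sl2 tr_conj.
by rewrite /Defs.form conj_mul // tr_conj // tr_eq0_form // mul0r.
Qed.

Lemma optrace_mulC (A B : op) : optrace (opmul A B) = optrace (opmul B A).
Proof.
rewrite /optrace /opmul /= exchange_big; apply: eq_bigr => a _.
by apply: eq_bigr => b _; rewrite mulrC.
Qed.

Lemma optrace_cj P Q A : (forall i, P i *m Q i = 1%:M) -> optrace (cj Q P A) = optrace A.
Proof.
by move=> h; rewrite /cj optrace_mulC -opmulA ten_one // opmul1l.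
Qed.

Lemma cj_bloch M N (rho : op) r : (forall i, M i *m N i = 1%:M) -> bloch_vector rho r ->
  forall p, cj M N rho p = 2%:R ^- n * @idop C n p +
     \sum_(I : {set 'I_n} | I != set0) cj M N (r I) p.
Proof.
move=> h [_ e] p.
have e' : forall p, rho p = 2%:R ^- n * @idop C n p +
   \sum_(I <- index_enum {set 'I_n} | I != set0) (fun _ => 1) I * r I p.
  by move=> q; rewrite e; congr (_ + _); apply: eq_bigr => I _; rewrite mul1r.
rewrite (Lin_cj M N e' p) cj_id //; congr (_ + _); apply: eq_bigr => I _; by rewrite mul1r.
Qed.

Theorem main_gen (rho : op) : L_state rho ->
  (is_X_state rho <->
   exists v : 'I_n -> 'M[C]_2, longitudinal v /\ forall r, bloch_vector rho r -> in_X v r).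
Proof.
move=> hL; split.
  move=> [P [hPu hX]].
  pose Q i := invmx (P i).
  have hQP i : Q i *m P i = 1%:M by rewrite mulVmx.
  have hPQ i : P i *m Q i = 1%:M by rewrite mulmxV.
  have hev := xstate_even hQP hX.
  exists (fun i => P i *m Dm *m Q i); split.
    move=> i; split; first by rewrite /sl2 tr_conj // Dm_tr.
    by rewrite /Defs.form conj_mul // tr_conj // -/(Defs.form Dm Dm) Dm_form oner_eq0.
  move=> r hr J hJ.
  pose r' I := cj Q P (r I).
  have hr' : bloch_vector (cj Q P rho) r'.
    split; last exact: (cj_bloch hQP hr).
    move=> I hI; apply: (span_Lin (Lin_cj Q P) _ (hr.1 I hI)) => g [x [hx ->]].
    apply: span1; exists (fun i => Q i *m x i *m P i); split; last exact: cj_emb.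
    by move=> i iI; rewrite /sl2 tr_conj //; apply: hx.
  have hLs : L_state (cj Q P rho) by rewrite /L_state optrace_cj.
  have hu := bloch_unique hr' (bloch_exists hLs) hJ.
  have -> : r J = cj P Q (rstar (cj Q P rho) J).
    by rewrite -(functional_extensionality _ _ hu) /r' cj_inv.
  apply: (span_Lin (Lin_cj P Q) _ (rstar_X hev hJ)) => g [x [T [sTJ hT hx ->]]].
  apply: span1; exists (fun i => P i *m x i *m Q i), T; split => //; last exact: cj_emb.
  move=> i iJ; move: (hx i iJ); case: ifP => _.
    exact: frame_back_trans.
  exact: frame_back_long.
move=> [v [hv hX]].
have hd : forall i, exists t : 'M[C]_2 * 'M[C]_2 * C,
    [/\ t.1.1 *m t.1.2 = 1%:M, t.1.2 *m t.1.1 = 1%:M, t.1.2 *m v i *m t.1.1 = t.2 *: Dm & t.2 != 0].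
  move=> i; have [h1 h2] := hv i.
  have [P [Q [l hh]]] := diag_exists h1 h2.
  by exists (P, Q, l).
have [t ht] := fin_all_exists hd.
pose P i := (t i).1.1; pose Q i := (t i).1.2.
have hPQ i : P i *m Q i = 1%:M by case: (ht i).
have hQP i : Q i *m P i = 1%:M by case: (ht i).
exists P; split; first by move=> i; case: (mulmx1_unit (hPQ i)).
apply: (even_xstate hPQ).
have hb := bloch_exists hL.
have hx := hX _ hb.
move=> u w huw.
rewrite (cj_bloch hQP hb) big1 ?addr0.
  rewrite /idop /=; case: eqP => [e|]; last by rewrite mulr0.
  by move: huw; rewrite e eqxx.
move=> I hI.
have sp := span_Lin (S' := @even_op) (Lin_cj Q P) _ (hx I hI).
apply: (span_ind (Q := fun f => f (u, w) = 0)) (sp _) => //.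
- by move=> f g -> ->; rewrite addr0.
- by move=> a f ->; rewrite mulr0.
- by move=> f g fg <-.
- by move=> g hg; apply: hg.
move=> g [x [T [sTI hT hxi ->]]].
apply: span1; rewrite cj_emb //.
apply: (emb_even sTI hT) => i iI.
have [_ _ hv' hl] := ht i.
move: (hxi i iI); case: ifP => _.
  by move=> htr a; apply: (frame_trans (hPQ i) hv' hl htr).
by move=> hlg a b; apply: (frame_long hv' hlg).
Qed.

End Dev.

Unset Implicit Arguments.

Theorem lemma4p7 (R : realType) (n : nat) (rho : op R[i] n) :
  L_state rho ->
  (is_X_state rho <->
   exists v : 'I_n -> 'M[R[i]]_2,
     longitudinal v /\ forall r, bloch_vector rho r -> in_X v r).
Proof. exact: (@main_gen R[i] n rho). Qed.
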